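(* The following algorithm is a linearizable, sequentially-exact, wait-free and fence-free implementation of RangeMaxRegister. It uses only atomic Read/Write objects and has constant step complexity in all its operations. The shared object is an atomic Read/Write register $R$ initialized to $1$. Each process has a persistent local variable $r$ initialized to $1$. ${\sf RMaxWrite}(x)$: $r\leftarrow\max\{r,R.{\sf Read}()\}$; if $x>r$ then $\{r\leftarrow x,\ R.{\sf Write}(x)\}$; return true. ${\sf RMaxRead}()$: $r\leftarrow\max\{r,R.{\sf Read}()\}$; return $r$.
   Context: Model: $n\ge2$ asynchronous, crash-prone processes $p_0,\dots,p_{n-1}$ communicate through atomic base objects. Each atomic base-object operation is one step. The notation $\{I_1,I_2\}$ means the two instructions may be executed in either order. RangeMaxRegister (sequential specification). States are $n$-vectors $(r_0,\dots,r_{n-1})$ of natural numbers, with initial state $(1,\dots,1)$. Invocations by $p_i$ carry subscript $i$. - ${\sf RMaxWrite}_i(x)$ sets $r_i\leftarrow x$ if $x>r_i$ (otherwise leaves the state unchanged) and returns true. - ${\sf RMaxRead}_i()$ may return any $x\in\{r_i,r_i+1,\dots,\max(r_0,\dots,r_{n-1})\}$, and sets $r_i\leftarrow x$. MaxRegister (sequential specification, initial value $1$). MaxWrite$(v)$ writes $v$ only if $v$ exceeds the largest value written so far. MaxRead returns the largest value written so far. Properties: - Linearizable: every finite execution admits a total order of its completed (and possibly some pending) operations that is a sequential execution of the specification, respects real-time order, and agrees on inputs and outputs. - Sequentially-exact: every sequential execution of the algorithm (one in which no two operations overlap) is a sequential execution of MaxRegister, with RMaxRead and RMaxWrite read as MaxRead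 and MaxWrite. - Wait-free: every operation of a process that keeps taking steps completes in finitely many of its own steps. - Fence-free: the algorithm requires no ordering among its steps beyond data dependence. - Step complexity: the maximum number of steps needed to complete an operation. *)

(* Defs.v *)
From mathcomp Require Import all_boot.
Unset Printing Implicit Defensive.

(* Operations and responses (shared by RangeMaxRegister and MaxRegister;     *)
(* RMaxWrite/RMaxRead are read as MaxWrite/MaxRead for sequential exactness) *)
Inductive op := RMaxWrite (x : nat) | RMaxRead.
Inductive res := Rbool (b : bool) | Rnat (v : nat).

Inductive event (n : nat) := Inv (i : 'I_n) (o : op) | Res (i : 'I_n) (r : res).
Arguments Inv {n}. Arguments Res {n}.

Definition proc_of n (e : event n) : 'I_n :=
  match e with Inv i _ => i | Res i _ => i end.
Arguments proc_of {n}.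

Record seq_spec (n : nat) := SeqSpec {
  sst : Type;
  sinit : sst;
  sstep : sst -> 'I_n -> op -> res -> sst -> Prop }.
Arguments sst {n}. Arguments sinit {n}. Arguments sstep {n}.

Fixpoint legal n (S : seq_spec n) (s : sst S) (l : seq ('I_n * op * res)) : Prop :=
  match l with
  | [::] => True
  | (i, o, r) :: l' => exists s', @sstep n S s i o r s' /\ @legal n S s' l'
  end.
Arguments legal {n} S s l.

Definition rmr_step n (s : 'I_n -> nat) (i : 'I_n) (o : op) (r : res)
    (s' : 'I_n -> nat) : Prop :=
  match o with
  | RMaxWrite x =>
      r = Rbool true /\
      (forall j, s' j = if j == i then (if s i < x then x else s i) else s j)
  | RMaxRead =>
      exists x, r = Rnat x /\ s i <= x /\ x <= \max_(j < n) s j /\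
      (forall j, s' j = if j == i then x else s j)
  end.

Definition RangeMaxRegister (n : nat) : seq_spec n :=
  @SeqSpec n ('I_n -> nat) (fun _ => 1) (@rmr_step n).

Definition mr_step n (s : nat) (i : 'I_n) (o : op) (r : res) (s' : nat) : Prop :=
  match o with
  | RMaxWrite v => r = Rbool true /\ s' = (if s < v then v else s)
  | RMaxRead => r = Rnat s /\ s' = s
  end.

Definition MaxRegister (n : nat) : seq_spec n :=
  @SeqSpec n nat 1 (@mr_step n).

(* LStep i  = one atomic base-object step of process i;
   LEnv     = a memory-system action (only used in the relaxed semantics,
              where it makes a buffered write take effect). *)
Inductive label (n : nat) :=
  | LInv (i : 'I_n) (o : op) | LRes (i : 'I_n) (r : res)
  | LStep (i : 'I_n) | LEnv.
Arguments LInv {n}. Arguments LRes {n}. Arguments LStep {n}. Arguments LEnv {n}.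

Record impl (n : nat) := Impl {
  icfg : Type;
  iinit : icfg;
  istep : icfg -> label n -> icfg -> Prop }.
Arguments icfg {n}. Arguments iinit {n}. Arguments istep {n}.

Inductive exec n (I : impl n) : icfg I -> seq (label n) -> icfg I -> Prop :=
  | ex_nil c : exec n I c [::] c
  | ex_cons c l c' ls c'' :
      istep I c l c' -> exec n I c' ls c'' -> exec n I c (l :: ls) c''.
Arguments exec {n}.

Definition label_event n (l : label n) : option (event n) :=
  match l with
  | LInv i o => Some (Inv i o)
  | LRes i r => Some (Res i r)
  | _ => None
  end.

Definition history n (ls : seq (label n)) : seq (event n) := pmap (@label_event n) ls.
Arguments history {n}.

Definition matched n (h : seq (event n)) (k k' : nat) (r : res) : Prop :=
  exists i o, onth h k = Some (Inv i o) /\ k < k' /\ onth h k' = Some (Res i r) /\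
    (forall j e, k < j < k' -> onth h j = Some e -> proc_of e <> i).
Arguments matched {n}.

(* A linearization L lists operations (by their invocation index in h) with
   their process, invocation and (possibly chosen) response:
   - it contains every completed operation, with its actual response,
   - possibly some pending operations, with some response,
   - each operation at most once,
   - it is a sequential execution of the specification,
   - it respects the real-time order of h. *)
Definition linearizable_hist n (S : seq_spec n) (h : seq (event n)) : Prop :=
  exists L : seq (nat * ('I_n * op * res)),
    (forall j k i o r, onth L j = Some (k, (i, o, r)) ->
        onth h k = Some (Inv i o) /\
        (forall k' r', matched h k k' r' -> r = r')) /\
    (forall k k' r, matched h k k' r -> exists j i o, onth L j = Some (k, (i, o, r))) /\
    (forall j1 j2 k x1 x2, onth L j1 = Some (k, x1) -> onth L j2 = Some (k, x2) ->
        j1 = j2) /\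
    legal S (sinit S) (map snd L) /\
    (forall j1 j2 k1 k2 x1 x2 k1' r1,
        onth L j1 = Some (k1, x1) -> onth L j2 = Some (k2, x2) ->
        matched h k1 k1' r1 -> k1' < k2 -> j1 < j2).
Arguments linearizable_hist {n}.

Definition linearizable n (S : seq_spec n) (I : impl n) : Prop :=
  forall ls c, exec I (iinit I) ls c -> linearizable_hist S (history ls).
Arguments linearizable {n}.

Inductive seqhist n : seq (event n) -> seq ('I_n * op * res) -> Prop :=
  | SH_nil : seqhist n [::] [::]
  | SH_pend i o : seqhist n [:: Inv i o] [::]
  | SH_cons i o r h l : seqhist n h l -> seqhist n (Inv i o :: Res i r :: h) ((i, o, r) :: l).
Arguments seqhist {n}.

Definition sequentially_exact n (I : impl n) : Prop :=
  forall ls c l, exec I (iinit I) ls c -> seqhist (history ls) l ->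
    legal (MaxRegister n) (sinit (MaxRegister n)) l.
Arguments sequentially_exact {n}.

Definition is_action_of n (i : 'I_n) (l : label n) : bool :=
  match l with LStep j => j == i | LRes j _ => j == i | _ => false end.
Definition is_step_of n (i : 'I_n) (l : label n) : bool :=
  match l with LStep j => j == i | _ => false end.
Definition is_res_of n (i : 'I_n) (l : label n) : bool :=
  match l with LRes j _ => j == i | _ => false end.
Arguments is_action_of {n}. Arguments is_step_of {n}. Arguments is_res_of {n}.

Definition inf_exec n (I : impl n) (sched : nat -> label n) : Prop :=
  exists cs : nat -> icfg I, cs 0 = iinit I /\
    forall t, istep I (cs t) (sched t) (cs t.+1).
Arguments inf_exec {n}.

Definition wait_free n (I : impl n) : Prop :=
  forall sched, inf_exec I sched ->
  forall k i o, sched k = LInv i o ->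
    (forall T, exists t, T <= t /\ is_action_of i (sched t)) ->
    exists t r, k < t /\ sched t = LRes i r.
Arguments wait_free {n}.

Definition step_complexity_le n (I : impl n) (c : nat) : Prop :=
  forall ls cf, exec I (iinit I) ls cf ->
  forall k i o m, onth ls k = Some (LInv i o) ->
    ~~ has (is_res_of i) (take m (drop k.+1 ls)) ->
    count (is_step_of i) (take m (drop k.+1 ls)) <= c.
Arguments step_complexity_le {n}.

Inductive pcs :=
  | Idle
  | WBegin (x : nat)    (* RMaxWrite(x): about to read R            *)
  | WDoWrite (x : nat)  (* RMaxWrite(x): x > r, about to write R    *)
  | WDone               (* RMaxWrite: about to return true           *)
  | RBegin              (* RMaxRead: about to read R                 *)
  | RDone (v : nat).    (* RMaxRead: about to return v               *)

(* aR: the shared register R; aloc i: the persistent local r of p_i;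
   abuf: writes issued but not yet taken effect (relaxed semantics only). *)
Record acfg (n : nat) := ACfg {
  aR : nat; aloc : 'I_n -> nat; apc : 'I_n -> pcs; abuf : seq nat }.
Arguments ACfg {n}. Arguments aR {n}. Arguments aloc {n}. Arguments apc {n}. Arguments abuf {n}.

Definition upd n T (f : 'I_n -> T) (i : 'I_n) (v : T) : 'I_n -> T :=
  fun j => if j == i then v else f j.
Arguments upd {n T}.

(* relaxed = false: sequentially consistent semantics, each R.Read/R.Write is
   an atomic step.  relaxed = true: a Write by a process only enters a pending
   pool and takes effect at an arbitrary later moment (LEnv), in arbitrary
   order; thus the only ordering kept among the steps of a process is data
   dependence (a write depends on the preceding read of its operation). *)
Definition alg_step (relaxed : bool) n (c : acfg n) (l : label n) (c' : acfg n) : Prop :=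
  match l with
  | LInv i (RMaxWrite x) =>
      apc c i = Idle /\ c' = ACfg (aR c) (aloc c) (upd (apc c) i (WBegin x)) (abuf c)
  | LInv i RMaxRead =>
      apc c i = Idle /\ c' = ACfg (aR c) (aloc c) (upd (apc c) i RBegin) (abuf c)
  | LStep i =>
      match apc c i with
      | WBegin x =>
          let r := maxn (aloc c i) (aR c) in
          c' = ACfg (aR c) (upd (aloc c) i r)
                    (upd (apc c) i (if r < x then WDoWrite x else WDone)) (abuf c)
      | WDoWrite x =>
          if relaxed then
            c' = ACfg (aR c) (upd (aloc c) i x) (upd (apc c) i WDone) (x :: abuf c)
          else
            c' = ACfg x (upd (aloc c) i x) (upd (apc c) i WDone) (abuf c)
      | RBegin =>
          let r := maxn (aloc c i) (aR c) in
          c' = ACfg (aR c) (upd (aloc c) i r) (upd (apc c) i (RDone r)) (abuf c)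
      | _ => False
      end
  | LRes i rs =>
      match apc c i, rs with
      | WDone, Rbool true =>
          c' = ACfg (aR c) (aloc c) (upd (apc c) i Idle) (abuf c)
      | RDone v, Rnat w =>
          v = w /\ c' = ACfg (aR c) (aloc c) (upd (apc c) i Idle) (abuf c)
      | _, _ => False
      end
  | LEnv =>
      relaxed /\ exists b1 v b2, abuf c = b1 ++ v :: b2 /\
        c' = ACfg v (aloc c) (apc c) (b1 ++ b2)
  end.

Definition alg_init n : acfg n := ACfg 1 (fun _ => 1) (fun _ => Idle) [::].

Definition alg (relaxed : bool) (n : nat) : impl n :=
  @Impl n (acfg n) (alg_init n) (@alg_step relaxed n).

(* Fence-freedom: the algorithm remains a linearizable implementation of
   RangeMaxRegister when its steps are only ordered by data dependence
   (writes may take effect arbitrarily late and out of order). *)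
Definition fence_free (n : nat) : Prop :=
  linearizable (RangeMaxRegister n) (alg true n).

(* Main.v *)
Require Import Defs.
From mathcomp Require Import all_boot.
From mathcomp Require Import zify.
Set Warnings "-notation-overridden".
Set Implicit Arguments. Unset Strict Implicit.

Lemma updE n T (f : 'I_n -> T) i v j : upd f i v j = if j == i then v else f j.
Proof. by []. Qed.


Definition IdleInv n (s : nat) (c : acfg n) :=
  aR c = s /\ forall j, apc c j = Idle /\ aloc c j <= aR c.

Arguments IdleInv {n}.

Definition PreRes n (i : 'I_n) (o : op) (s : nat) (c : acfg n) :=
 (forall j, j != i -> apc c j = Idle /\ aloc c j <= aR c) /\
 match apc c i with
 | WBegin x => o = RMaxWrite x /\ aloc c i <= aR c /\ aR c = s
 | WDoWrite x => o = RMaxWrite x /\ aloc c i = aR c /\ aR c = s /\ s < x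
 | WDone => exists x, o = RMaxWrite x /\ aloc c i <= aR c /\ aR c = (if s < x then x else s)
 | RBegin => o = RMaxRead /\ aloc c i <= aR c /\ aR c = s
 | RDone v => o = RMaxRead /\ v = s /\ aloc c i <= aR c /\ aR c = s
 | Idle => False end.

Arguments PreRes {n}.

Lemma seq_main n ls (c c' : acfg n) : exec (alg false n) c ls c' ->
  (forall s, IdleInv s c -> forall l, seqhist (history ls) l -> legal (MaxRegister n) s l) /\
  (forall i o s, PreRes i o s c -> forall r h l, history ls = Res i r :: h -> seqhist h l ->
      exists s', @mr_step n s i o r s' /\ legal (MaxRegister n) s' l).
Proof.
elim=> {c ls c'} [c|c lab c1 ls c'' Hst _ [IH1 IH2]].
  split; last by move=> i o s _ r h l.
  by move=> s _ l H; inversion H.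
case: lab Hst => [i o|i r0|i|] /= Hst.
- split.
    move=> s [HR Hj] l Hsh.
    have Hpre : PreRes i o s c1.
      clear Hsh; case: o Hst => [x|] [Hpc ->]; (split; [move=> j /negPf ji; rewrite /= updE ji; exact: Hj|]);
        rewrite /= updE eqxx /=; have [_ ?] := Hj i; by split.
    inversion Hsh; subst; first by [].
    have [s' [Hs Hl]] := IH2 _ _ _ Hpre _ _ _ (esym H2) H3.
    by exists s'.
  by move=> i0 o0 s _ r h l.
- split.
    move=> s [HR Hj]; have [Hp _] := Hj i; by rewrite Hp in Hst.
  move=> i0 o s [Hj Hi] r h l [? ? ?] Hsh; subst.
  case E: (apc c i0) Hi Hst => [|x|x||| v] //=.
  + move=> [x [-> [Hle HR]]]; case: r => [[]|w] //= ?; subst c1.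
    exists (aR c); split; first by rewrite HR.
    apply: IH1 => //; split=> // j; rewrite /= updE.
    case: eqP => [->|/eqP ji]; first by [].
    by apply: Hj.
  + move=> [Ho [Hv [Hle HR]]]; case: r => [b|w] //= [Hw ?]; subst.
    exists (aR c); split; first by [].
    apply: IH1 => //; split=> // j; rewrite /= updE.
    case: eqP => [->|/eqP ji]; first by [].
    by apply: Hj.
- split.
    move=> s [HR Hj]; have [Hp _] := Hj i; by rewrite Hp in Hst.
  move=> i0 o s [Hj Hi] r h l Hh Hsh.
  have ii0 : i = i0.
    apply/eqP; apply/negPn/negP => /Hj [Hp _]; by rewrite Hp in Hst.
  subst i0.
  apply: (IH2 _ _ _ _ _ _ _ Hh Hsh).
  case E: (apc c i) Hi Hst => [|x|x||| v] //=.
  + move=> [-> [Hle HR]] ->; split.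
      move=> j ji; rewrite /= !updE (negPf ji); have [? ?] := Hj j ji; split=> //.
    rewrite /= !updE eqxx.
    have -> : maxn (aloc c i) (aR c) = aR c by apply/maxn_idPr.
    case: ifP => Hx /=; first by rewrite HR in Hx *.
    exists x; rewrite -HR Hx; by split.
  + move=> [-> [Heq [HR Hx]]] ->; split.
      move=> j ji; rewrite /= !updE (negPf ji); have [? ?] := Hj j ji; split=> //.
      lia.
    rewrite /= !updE eqxx /=; exists x; by rewrite Hx.
  + move=> [-> [Hle HR]] ->; split.
      move=> j ji; rewrite /= !updE (negPf ji); have [? ?] := Hj j ji; split=> //.
    rewrite /= !updE eqxx /=.
    have -> : maxn (aloc c i) (aR c) = aR c by apply/maxn_idPr.
    by [].
- by case: Hst.
Qed.

Lemma seq_exact n : sequentially_exact (alg false n).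
Proof.
move=> ls c l Hex Hsh.
have [H1 _] := @seq_main _ _ _ _ Hex.
apply: H1 Hsh; split=> // j; by split.
Qed.


Lemma exec_cat n (I : impl n) a b c c'' : exec I c (a ++ b) c'' ->
  exists c', exec I c a c' /\ exec I c' b c''.
Proof.
elim: a c => [|x a IH] c /=; first by move=> H; exists c; split=> //; constructor.
move=> H; inversion H; subst.
have [c2 [H1 H2]] := IH _ H5.
exists c2; split=> //; econstructor; eauto.
Qed.

Definition dpc (p : pcs) : nat :=
  match p with Idle => 0 | WBegin _ => 3 | WDoWrite _ => 2 | WDone => 1
  | RBegin => 2 | RDone _ => 1 end.

Lemma pc_other rel n (c : acfg n) l c' i : alg_step rel n c l c' -> apc c i <> Idle ->
  ~~ is_action_of i l -> apc c' i = apc c i.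
Proof.
case: l => [j o|j r|j|] /=.
- case: o => [x|] [Hj ->] Hi _ /=; rewrite updE; case: eqP => // E; subst; by rewrite Hj in Hi.
- move=> + _ /negPf ji; case: (apc c j) => //; first by case: r => // [[]] // -> /=; rewrite updE eq_sym ji.
  by move=> v; case: r => // w [_ ->] /=; rewrite updE eq_sym ji.
- move=> + _ /negPf ji; case: (apc c j) => // [x|x|] /=.
  + by move=> -> /=; rewrite updE eq_sym ji.
  + by case: rel => -> /=; rewrite updE eq_sym ji.
  + by move=> -> /=; rewrite updE eq_sym ji.
- by move=> [_ [b1 [v [b2 [_ ->]]]]].
Qed.

Lemma pc_step rel n (c : acfg n) i c' : alg_step rel n c (LStep i) c' ->
  apc c' i <> Idle /\ dpc (apc c' i) < dpc (apc c i).
Proof.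
rewrite /=; case: (apc c i) => // [x|x|].
- move=> -> /=; rewrite updE eqxx; by case: ifP.
- by case: rel => -> /=; rewrite updE eqxx.
- by move=> -> /=; rewrite updE eqxx.
Qed.

Lemma count_steps rel n (c c' : acfg n) ls i : exec (alg rel n) c ls c' -> apc c i <> Idle ->
  ~~ has (is_res_of i) ls -> count (is_step_of i) ls < dpc (apc c i).
Proof.
elim=> {c ls c'} [c|c l c1 ls c'' Hst _ IH] Hi /=.
  by case: (apc c i) Hi.
rewrite negb_or => /andP [Hr Hh].
case Ea: (is_action_of i l).
- case: l Hst Ea Hr => [j o|j r|j|] //= Hst /eqP Eji; subst j.
  + by rewrite eqxx.
  + have [H1 H2] := pc_step Hst; have := IH H1 Hh; rewrite eqxx; lia.
- rewrite (pc_other Hst Hi (negbT Ea)) in IH.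
  have -> : is_step_of i l = false.
    by case: l Ea {Hst Hr} => //= j ->.
  by rewrite add0n; apply: IH.
Qed.

Lemma onth_split T (s : seq T) k x : onth s k = Some x -> s = take k s ++ x :: drop k.+1 s.
Proof.
elim: s k => [|y s IH] [|k] //= H; [by case: H => ->; rewrite drop0 | by rewrite -IH].
Qed.

Lemma step_cplx n : step_complexity_le (alg false n) 2.
Proof.
move=> ls cf Hex k i o m Hk Hnr.
rewrite (onth_split Hk) in Hex.
have [c1 [_ H2]] := exec_cat Hex.
inversion H2 as [|? ? c' ? ? H4 H6]; subst.
rewrite -(cat_take_drop m (drop k.+1 ls)) in H6.
have [c3 [H3 _]] := exec_cat H6.
have Hpc : apc c' i = (match o with RMaxWrite x => WBegin x | RMaxRead => RBegin end).
  clear -H4; by case: o H4 => [x|] /= [_ ->] /=; rewrite updE eqxx.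
have H := count_steps H3 _ Hnr; rewrite Hpc in H.
clear -H; case: o H => [x|] /= H; have := H ltac:(by []); lia.
Qed.

Lemma wait_free_alg n : wait_free (alg false n).
Proof.
move=> sched [cs [Hc0 Hst]] k i o Hk Hinf.
have Hpc1 : apc (cs k.+1) i <> Idle.
  have := Hst k; rewrite Hk; clear; by case: o => [x|] /= [_ ->] /=; rewrite updE eqxx.
suff main : forall m t, k < t -> apc (cs t) i <> Idle -> dpc (apc (cs t) i) <= m ->
    exists t' r, k < t' /\ sched t' = LRes i r.
  by apply: (main _ k.+1 (ltnSn k) Hpc1 (leqnn _)).
elim=> [|m IH] t Hkt Hne Hd.
  by case: (apc (cs t) i) Hne Hd.
have Hex : exists t1, (t <= t1) && is_action_of i (sched t1).
  have [t1 [H1 H2]] := Hinf t; exists t1; by rewrite H1 H2.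
case: (ex_minnP Hex) => t1 /andP [Htt1 Hact] Hmin.
have Hconst : forall d, t + d <= t1 -> apc (cs (t + d)) i = apc (cs t) i.
  elim=> [|d IHd] Hd'; first by rewrite addn0.
  rewrite addnS.
  have Hna : ~~ is_action_of i (sched (t + d)).
    apply/negP => Ha.
    have := Hmin (t + d); rewrite leq_addr Ha => /(_ isT); lia.
  have IH' : apc (cs (t + d)) i = apc (cs t) i by apply: IHd; lia.
  have Hne2 : apc (cs (t+d)) i <> Idle by rewrite IH'.
  by rewrite (pc_other (Hst (t + d)) Hne2 Hna) IH'.
have Hpt1 : apc (cs t1) i = apc (cs t) i.
  have := Hconst (t1 - t); rewrite subnKC //; by apply.
case Es: (sched t1) Hact => [j o'|j r|j|] //= /eqP Eji; subst j.
  by exists t1, r; split=> //; lia.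
have := Hst t1; rewrite Es => Hs.
have [Hne' Hlt] := pc_step Hs.
apply: (IH t1.+1) => //; first lia.
rewrite Hpt1 in Hlt; lia.
Qed.

Lemma onth_rcons T (h : seq T) e k :
  onth (rcons h e) k = if k < size h then onth h k else if k == size h then Some e else None.
Proof.
rewrite -cats1 onth_cat; case: ltnP => // Hk.
case: eqP => [->|Hne]; first by rewrite subnn.
by rewrite onth_default //= subn_gt0 ltn_neqAle eq_sym; apply/andP; split=> //; apply/eqP.
Qed.

Lemma onth_some T (h : seq T) k x : onth h k = Some x -> k < size h.
Proof. by move=> H; rewrite -onthTE H. Qed.

Lemma onth_old T (h : seq T) e k x : onth h k = Some x -> onth (rcons h e) k = Some x.
Proof. by move=> H; rewrite onth_rcons (onth_some H). Qed.

Lemma matched_old n (h : seq (event n)) e k k' r : matched h k k' r -> matched (rcons h e) k k' r.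
Proof.
move=> [i [o [H1 [H2 [H3 H4]]]]]; exists i, o; split; first exact: onth_old.
split=> //; split; first exact: onth_old.
move=> j e' /andP [Hj1 Hj2]; rewrite onth_rcons.
have Hk' := onth_some H3.
have -> : j < size h by lia.
apply: H4; lia.
Qed.

Lemma matched_new n (h : seq (event n)) e k k' r : matched (rcons h e) k k' r ->
  matched h k k' r \/
  (k' = size h /\ exists i o, e = Res i r /\ onth h k = Some (Inv i o) /\
     (forall j e', k < j -> onth h j = Some e' -> proc_of e' <> i)).
Proof.
move=> [i [o [H1 [H2 [H3 H4]]]]].
move: (H3); rewrite onth_rcons; case: ltnP => Hk' H3'.
  left; exists i, o.
  have Hk : k < size h by lia.
  move: H1; rewrite onth_rcons Hk => H1.
  split=> //; split=> //; split=> //.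
  move=> j e' /andP [Hj1 Hj2] Hj; apply: (H4 j e'); first by rewrite Hj1 Hj2.
  by rewrite onth_rcons (_ : j < size h) //; lia.
case: eqP H3' => // Ek [Ee]; subst k'.
right; split=> //; exists i, o; split=> //.
have Hk : k < size h by lia.
move: H1; rewrite onth_rcons Hk => H1; split=> //.
move=> j e' Hj Hje; apply: (H4 j e').
  by rewrite Hj (onth_some Hje).
by apply: onth_old.
Qed.

Definition pendk n (h : seq (event n)) (i : 'I_n) (k : nat) (o : op) :=
  onth h k = Some (Inv i o) /\
  forall k2 e, k < k2 -> onth h k2 = Some e -> proc_of e <> i.

Lemma pendk_old n (h : seq (event n)) i k o e : pendk h i k o -> proc_of e <> i ->
  pendk (rcons h e) i k o.
Proof.
move=> [H1 H2] He; split; first exact: onth_old.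
move=> k2 e2 Hk2; rewrite onth_rcons; case: ltnP => _; first by apply: H2.
by case: eqP => // _ [<-].
Qed.

Lemma pendk_not_matched n (h : seq (event n)) i k o k' r : pendk h i k o -> ~ matched h k k' r.
Proof.
move=> [H1 H2] [i' [o' [H3 [H4 [H5 _]]]]].
rewrite H1 in H3; case: H3 => Ei _; subst i'.
by apply: (H2 _ _ H4 H5).
Qed.

Lemma pendk_uniq n (h : seq (event n)) i k o k2 o2 : pendk h i k o ->
  onth h k2 = Some (Inv i o2) ->
  (forall j e', k2 < j -> onth h j = Some e' -> proc_of e' <> i) -> k2 = k.
Proof.
move=> [H1 H2] H3 H4.
case: (ltngtP k k2) => // Hlt.
  by have := H2 _ _ Hlt H3.
by have := H4 _ _ Hlt H1.
Qed.

Lemma pendk_diff n (h : seq (event n)) i k o j k2 o2 : pendk h i k o -> pendk h j k2 o2 ->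
  i <> j -> k <> k2.
Proof. by move=> [H1 _] [H2 _] ij E; subst; rewrite H1 in H2; case: H2. Qed.

Lemma onth_rconsP T (h : seq T) e j x : onth (rcons h e) j = Some x ->
  (j < size h /\ onth h j = Some x) \/ (j = size h /\ x = e).
Proof.
rewrite onth_rcons; case: ltnP => Hj; first by left.
by case: eqP => // -> [<-]; right.
Qed.

Inductive run n : ('I_n -> nat) -> seq ('I_n * op * res) -> ('I_n -> nat) -> Prop :=
| run_nil s : run s [::] s
| run_cons s i o r s1 l s2 : @rmr_step n s i o r s1 -> run s1 l s2 -> run s ((i, o, r) :: l) s2.

Lemma run_rcons n (s s1 s2 : 'I_n -> nat) l i o r : run s l s1 -> @rmr_step n s1 i o r s2 ->
  run s (rcons l (i, o, r)) s2.
Proof.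
elim=> {s l s1} [s|s i' o' r' s1 l s3 H _ IH] H2 /=.
  by econstructor; [exact: H2 | constructor].
by econstructor; [exact: H | apply: IH].
Qed.

Lemma run_legal n (s s' : 'I_n -> nat) l : run s l s' -> legal (RangeMaxRegister n) s l.
Proof.
elim=> {s l s'} [s|s i o r s1 l s2 H _ IH] //=.
by exists s1.
Qed.

Definition Lseq n := seq (nat * ('I_n * op * res)).

Definition notinL n (L : Lseq n) k := forall j x, onth L j = Some (k, x) -> False.

Definition pcrel n (h : seq (event n)) (L : Lseq n) (p : pcs) (i : 'I_n) : Prop :=
  match p with
  | Idle => True
  | WBegin x => exists k, pendk h i k (RMaxWrite x) /\ notinL L k
  | WDoWrite x => exists k, pendk h i k (RMaxWrite x) /\ notinL L k
  | RBegin => exists k, pendk h i k RMaxRead /\ notinL L k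
  | WDone => exists k x, pendk h i k (RMaxWrite x) /\
      exists j, onth L j = Some (k, (i, RMaxWrite x, Rbool true))
  | RDone v => exists k, pendk h i k RMaxRead /\
      exists j, onth L j = Some (k, (i, RMaxRead, Rnat v))
  end.

Definition HistInv n (h : seq (event n)) (L : Lseq n) :=
    (forall j k i o r, onth L j = Some (k, (i, o, r)) ->
        onth h k = Some (Inv i o) /\
        (forall k' r', matched h k k' r' -> r = r')) /\
    (forall k k' r, matched h k k' r -> exists j i o, onth L j = Some (k, (i, o, r))) /\
    (forall j1 j2 k x1 x2, onth L j1 = Some (k, x1) -> onth L j2 = Some (k, x2) ->
        j1 = j2) /\
    (forall j1 j2 k1 k2 x1 x2 k1' r1,
        onth L j1 = Some (k1, x1) -> onth L j2 = Some (k2, x2) ->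
        matched h k1 k1' r1 -> k1' < k2 -> j1 < j2).

Lemma add_entry n (h : seq (event n)) L i k o r : HistInv h L -> pendk h i k o -> notinL L k ->
  HistInv h (rcons L (k, (i, o, r))).
Proof.
move=> [I3 [I4 [I5 I6]]] Hp Hn; split; [|split; [|split]].
- move=> j k0 i0 o0 r0 H'; case: (onth_rconsP H') => [[_ H]|[_ [-> -> -> ->]]]; first exact: I3 H.
  split; first by case: Hp.
  by move=> k' r' /(pendk_not_matched Hp).
- move=> k0 k' r0 /I4 [j [i0 [o0 H]]]; exists j, i0, o0; exact: onth_old.
- move=> j1 j2 k0 x1 x2 H1' H2'.
  case: (onth_rconsP H1') => [[_ H1]|[E1 E2]]; case: (onth_rconsP H2') => [[_ H2]|[E3 E4]].
  + exact: I5 H1 H2.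
  + by case: E4 => E4 _; subst; case: (Hn _ _ H1).
  + by case: E2 => E2 _; subst; case: (Hn _ _ H2).
  + by subst.
- move=> j1 j2 k1 k2 x1 x2 k1' r1 H1' H2' Hm Hlt.
  case: (onth_rconsP H1') => [[Hj1 H1]|[E1 E2]]; case: (onth_rconsP H2') => [[_ H2]|[E3 E4]].
  + exact: I6 H1 H2 Hm Hlt.
  + by subst.
  + by case: E2 => E2 _; subst; case: (pendk_not_matched Hp Hm).
  + by case: E2 => E2 _; subst; case: (pendk_not_matched Hp Hm).
Qed.

Lemma pcrel_add n (h : seq (event n)) L p j i k o r : pcrel h L p j -> pendk h i k o ->
  j <> i -> pcrel h (rcons L (k, (i, o, r))) p j.
Proof.
move=> Hr Hpi ji.
have Hn : forall k2 o2, pendk h j k2 o2 -> notinL L k2 -> notinL (rcons L (k, (i, o, r))) k2.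
  move=> k2 o2 Hp2 Hn2 j0 x H'; case: (onth_rconsP H') => [[_ H]|[_ [E _]]]; first exact: Hn2 H.
  exact: (pendk_diff Hpi Hp2 (nesym ji) (esym E)).
case: p Hr => [|x|x||| v] //=.
- by move=> [k2 [Hp2 Hn2]]; exists k2; split=> //; apply: Hn Hp2 Hn2.
- by move=> [k2 [Hp2 Hn2]]; exists k2; split=> //; apply: Hn Hp2 Hn2.
- by move=> [k2 [x [Hp2 [j0 H]]]]; exists k2, x; split=> //; exists j0; apply: onth_old.
- by move=> [k2 [Hp2 Hn2]]; exists k2; split=> //; apply: Hn Hp2 Hn2.
- by move=> [k2 [Hp2 [j0 H]]]; exists k2; split=> //; exists j0; apply: onth_old.
Qed.

Lemma pcrel_ev n (h : seq (event n)) L p j e : pcrel h L p j -> proc_of e <> j ->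
  pcrel (rcons h e) L p j.
Proof.
move=> Hr He; case: p Hr => [|x|x||| v] //=.
- by move=> [k2 [Hp2 Hn2]]; exists k2; split=> //; apply: pendk_old.
- by move=> [k2 [Hp2 Hn2]]; exists k2; split=> //; apply: pendk_old.
- by move=> [k2 [x [Hp2 H]]]; exists k2, x; split=> //; apply: pendk_old.
- by move=> [k2 [Hp2 Hn2]]; exists k2; split=> //; apply: pendk_old.
- by move=> [k2 [Hp2 H]]; exists k2; split=> //; apply: pendk_old.
Qed.

Lemma hist_inv n (h : seq (event n)) L i o : HistInv h L -> HistInv (rcons h (Inv i o)) L.
Proof.
move=> [I3 [I4 [I5 I6]]]; split; [|split; [|split]].
- move=> j k i0 o0 r0 /I3 [H1 H2]; split; first exact: onth_old.
  by move=> k' r' /matched_new [/H2 //|[_ [? [? [//]]]]].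
- by move=> k k' r /matched_new [/I4 //|[_ [? [? [//]]]]].
- exact: I5.
- move=> j1 j2 k1 k2 x1 x2 k1' r1 H1 H2 /matched_new [Hm|[_ [? [? [//]]]]].
  exact: I6 H1 H2 Hm.
Qed.

Lemma hist_res n (h : seq (event n)) L i r k o j0 : HistInv h L -> pendk h i k o ->
  onth L j0 = Some (k, (i, o, r)) -> HistInv (rcons h (Res i r)) L.
Proof.
move=> [I3 [I4 [I5 I6]]] Hp Hj0; split; [|split; [|split]].
- move=> j k1 i1 o1 r1 Hj; have [H1 H2] := I3 _ _ _ _ _ Hj.
  split; first exact: onth_old.
  move=> k' r' /matched_new [/H2 //|[_ [i2 [o2 [[E1 E2] [H3 H4]]]]]]; subst i2 r'.
  have Ek := pendk_uniq Hp H3 H4; subst k1.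
  have Ej := I5 _ _ _ _ _ Hj Hj0; subst j.
  by rewrite Hj0 in Hj; case: Hj.
- move=> k1 k' r' /matched_new [/I4 //|[_ [i2 [o2 [[E1 E2] [H3 H4]]]]]]; subst i2 r'.
  have Ek := pendk_uniq Hp H3 H4; subst k1.
  by exists j0, i, o.
- exact: I5.
- move=> j1 j2 k1 k2 x1 x2 k1' r1 H1 H2 /matched_new [Hm|[E _]].
    exact: I6 H1 H2 Hm.
  subst k1' => Hlt.
  case: x2 H2 => [[i2 o2] r2] H2.
  have [H5 _] := I3 _ _ _ _ _ H2.
  have := onth_some H5; lia.
Qed.


Definition Mx n (S : 'I_n -> nat) := \max_(j < n) S j.

Lemma Mx_ge n (S : 'I_n -> nat) j : S j <= Mx S.
Proof. rewrite /Mx; exact: (@leq_bigmax _ (fun j => S j) j). Qed.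

Lemma Mx_mono n (S S' : 'I_n -> nat) : (forall j, S j <= S' j) -> Mx S <= Mx S'.
Proof.
move=> H; apply/bigmax_leqP => j _; apply: leq_trans (H j) _; exact: Mx_ge.
Qed.

Definition CfgInv n (c : acfg n) (S : 'I_n -> nat) :=
  (forall j, S j <= aloc c j /\ aloc c j <= Mx S) /\ aR c <= Mx S /\
  (forall b, b \in abuf c -> b <= Mx S) /\ (forall j x, apc c j = WDoWrite x -> aloc c j < x).

Definition AInv n (h : seq (event n)) (c : acfg n) (L : Lseq n) (S : 'I_n -> nat) :=
  run (fun _ => 1) (map snd L) S /\ HistInv h L /\ CfgInv c S /\ forall i, pcrel h L (apc c i) i.

Lemma pendk_new n (h : seq (event n)) i o : pendk (rcons h (Inv i o)) i (size h) o.
Proof.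
split; first by rewrite onth_rcons ltnn eqxx.
move=> k2 e Hk; rewrite onth_rcons; have -> : (k2 < size h) = false by lia.
by have -> : (k2 == size h) = false by lia.
Qed.

Lemma notinL_new n (h : seq (event n)) L : HistInv h L -> notinL L (size h).
Proof.
move=> [I3 _] j [[i o] r] /I3 [H _]; have := onth_some H; lia.
Qed.

Lemma onth_last T (L : seq T) e : onth (rcons L e) (size L) = Some e.
Proof. by rewrite onth_rcons ltnn eqxx. Qed.

Lemma step_inv rel n h (c c' : acfg n) L S l : AInv h c L S -> alg_step rel n c l c' ->
  exists L' S', AInv (h ++ pmap (@label_event n) [:: l]) c' L' S'.
Proof.
move=> [Hrun [HH [[Hloc [HR [Hbuf Hww]]] Hpc]]].
case: l => [i o|i r|i|] /= Hst.
-
  rewrite cats1; exists L, S.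
  have [Hidle Hc'] : apc c i = Idle /\
      c' = ACfg (aR c) (aloc c) (upd (apc c) i
             (match o with RMaxWrite x => WBegin x | RMaxRead => RBegin end)) (abuf c).
    by case: o Hst.
  subst c'; split=> //; split; first exact: hist_inv.
  split.
    split=> //; split=> //; split=> //.
    move=> j x; rewrite /= updE; case: eqP => [_|_]; first by case: o {Hst}.
    exact: Hww.
  move=> j; rewrite /= updE; case: eqP => [->|/eqP ji].
    case: o {Hst} => [x|] /=; exists (size h); split; (apply: pendk_new || exact: notinL_new HH).
  apply: pcrel_ev; first exact: Hpc.
  by move=> /= E; rewrite E eqxx in ji.
-
  rewrite cats1; exists L, S.
  have Hpi := Hpc i.
  have [k [o [j0 [Hp [Hj0 Hc']]]]] : exists k o j0, pendk h i k o /\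
      onth L j0 = Some (k, (i, o, r)) /\
      c' = ACfg (aR c) (aloc c) (upd (apc c) i Idle) (abuf c).
    move: Hpi Hst; case: (apc c i) => // [|v] /=.
      move=> [k [x [Hp [j0 Hj0]]]]; case: r => // [[]] // ->.
      by exists k, (RMaxWrite x), j0.
    move=> [k [Hp [j0 Hj0]]]; case: r => // w [Ev ->]; subst w.
    by exists k, RMaxRead, j0.
  subst c'; split=> //; split; first exact: hist_res HH Hp Hj0.
  split.
    split=> //; split=> //; split=> //.
    move=> j x; rewrite /= updE; case: eqP => [_|_] //.
    exact: Hww.
  move=> j; rewrite /= updE; case: eqP => [->|/eqP ji] //.
  apply: pcrel_ev; first exact: Hpc.
  by move=> /= E; rewrite E eqxx in ji.
-
  rewrite cats0.
  have Hpi := Hpc i.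
  have Hother : forall (L' : Lseq n) (p : pcs) j, j != i ->
      (forall j, j != i -> pcrel h L (apc c j) j -> pcrel h L' (apc c j) j) ->
      pcrel h L' (upd (apc c) i p j) j.
    move=> L' p j ji HL; rewrite updE (negPf ji); apply: HL => //.
  have HMloc : maxn (aloc c i) (aR c) <= Mx S.
    by rewrite geq_max HR andbT; case: (Hloc i).
  have HSloc : S i <= maxn (aloc c i) (aR c).
    by apply: leq_trans (leq_maxl _ _); case: (Hloc i).
  move: Hpi Hst; case Epc: (apc c i) => [|x|x||| v] //=.
  +
    move=> [k [Hp Hn]] Hc'; subst c'.
    case: ifP => Hmx.
    * exists L, S; split=> //; split=> //; split.
        split.
          move=> j; rewrite /= updE; case: eqP => [->|_] //; by split.
        split=> //; split=> //.
        move=> j y; rewrite /= !updE; case: eqP => [_|_]; first by move=> [<-].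
        exact: Hww.
      move=> j; rewrite /= updE; case: eqP => [->|/eqP ji]; first by exists k.
      exact: Hpc.
    * set S' := upd S i (if S i < x then x else S i).
      have HS'i : S' i = (if S i < x then x else S i) by rewrite /S' updE eqxx.
      have HS'j : forall j, j != i -> S' j = S j by move=> j ji; rewrite /S' updE (negPf ji).
      have HSS : forall j, S j <= S' j.
        move=> j; rewrite /S' updE; case: eqP => [->|] //; case: ifP => //; lia.
      have HMM := Mx_mono HSS.
      exists (rcons L (k, (i, RMaxWrite x, Rbool true))), S'.
      split; first by rewrite map_rcons; apply: run_rcons Hrun _.
      split; first exact: add_entry.
      split.
        split.
          move=> j; case: (eqVneq j i) => [->|ji].
            rewrite /= updE eqxx; split; last by lia.
            rewrite HS'i; case: ifP; lia.
          rewrite /= updE (negPf ji) (HS'j _ ji).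
          have [? ?] := Hloc j; split=> //; lia.
        split; first by rewrite /=; lia.
        split; first by move=> b /Hbuf; lia.
        move=> j y; rewrite /= !updE; case: eqP => [_|_] //.
        exact: Hww.
      move=> j; rewrite /= updE; case: eqP => [->|/eqP ji].
        exists k, x; split=> //; exists (size L); exact: onth_last.
      apply: (pcrel_add _ (Hpc j) Hp).
      by move=> E; rewrite E eqxx in ji.
  +
    move=> [k [Hp Hn]] Hc'.
    have Hlt := Hww i x Epc.
    set S' := upd S i x.
    have HS'i : S' i = x by rewrite /S' updE eqxx.
    have HS'j : forall j, j != i -> S' j = S j by move=> j ji; rewrite /S' updE (negPf ji).
    have HSS : forall j, S j <= S' j.
      move=> j; rewrite /S' updE; case: eqP => [->|] //; have [? ?] := Hloc i; lia.
    have HMM := Mx_mono HSS.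
    have HxM : x <= Mx S' by have := Mx_ge S' i; rewrite HS'i.
    exists (rcons L (k, (i, RMaxWrite x, Rbool true))), S'.
    split.
      rewrite map_rcons; apply: run_rcons Hrun _; split=> // j.
      rewrite /S' updE; case: eqP => // _; have [? ?] := Hloc i.
      by have -> : S i < x by lia.
    split; first exact: add_entry.
    have Hpc' : forall j, pcrel h (rcons L (k, (i, RMaxWrite x, Rbool true)))
                  (upd (apc c) i WDone j) j.
      move=> j; rewrite updE; case: eqP => [->|/eqP ji].
        exists k, x; split=> //; exists (size L); exact: onth_last.
      apply: (pcrel_add _ (Hpc j) Hp).
      by move=> E; rewrite E eqxx in ji.
    have Hloc' : forall j, S' j <= upd (aloc c) i x j /\ upd (aloc c) i x j <= Mx S'.
      move=> j; case: (eqVneq j i) => [->|ji].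
        by rewrite updE eqxx HS'i; split.
      rewrite updE (negPf ji) (HS'j _ ji).
      have [? ?] := Hloc j; split=> //; lia.
    have Hww' : forall j y, upd (apc c) i WDone j = WDoWrite y -> upd (aloc c) i x j < y.
      move=> j y; rewrite !updE; case: eqP => [_|_] //; exact: Hww.
    case: rel Hc' => Hc'; subst c'.
    * split; last exact: Hpc'.
      split; first exact: Hloc'.
      split; first by rewrite /=; lia.
      split; last exact: Hww'.
      move=> b; rewrite /= in_cons => /orP [/eqP ->|/Hbuf]; lia.
    * split; last exact: Hpc'.
      split; first exact: Hloc'.
      split; first by [].
      split; last exact: Hww'.
      move=> b /Hbuf; lia.
  +
    move=> [k [Hp Hn]] Hc'; subst c'.
    set m := maxn (aloc c i) (aR c) in HMloc HSloc *.
    set S' := upd S i m.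
    have HS'i : S' i = m by rewrite /S' updE eqxx.
    have HS'j : forall j, j != i -> S' j = S j by move=> j ji; rewrite /S' updE (negPf ji).
    have HSS : forall j, S j <= S' j.
      move=> j; rewrite /S' updE; case: eqP => [->|] //.
    have HMM := Mx_mono HSS.
    exists (rcons L (k, (i, RMaxRead, Rnat m))), S'.
    split.
      rewrite map_rcons; apply: run_rcons Hrun _; exists m; split=> //.
    split; first exact: add_entry.
    split.
      split.
        move=> j; case: (eqVneq j i) => [->|ji].
          rewrite /= updE eqxx HS'i; split=> //; lia.
        rewrite /= updE (negPf ji) (HS'j _ ji).
        have [? ?] := Hloc j; split=> //; lia.
      split; first by rewrite /=; lia.
      split; first by move=> b /Hbuf; lia.
      move=> j y; rewrite /= !updE; case: eqP => [_|_] //.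
      exact: Hww.
    move=> j; rewrite /= updE; case: eqP => [->|/eqP ji].
      exists k; split=> //; exists (size L); exact: onth_last.
    apply: (pcrel_add _ (Hpc j) Hp).
    by move=> E; rewrite E eqxx in ji.
-
  rewrite cats0; exists L, S.
  case: Hst => _ [b1 [v [b2 [Hb Hc']]]]; subst c'.
  split=> //; split=> //; split; last exact: Hpc.
  split; first exact: Hloc.
  split; first by apply: Hbuf; rewrite Hb mem_cat in_cons eqxx orbT.
  split; last exact: Hww.
  move=> b Hb'; apply: Hbuf; rewrite Hb mem_cat in_cons.
  move: Hb'; rewrite /= mem_cat => /orP [->|->] //; by rewrite !orbT.
Qed.



Lemma reach rel n : 0 < n -> forall ls c, exec (alg rel n) (alg_init n) ls c ->
  exists L S, AInv (history ls) c L S.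
Proof.
move=> n0; elim/last_ind => [|ls l IH] c.
  move=> H; inversion H; subst.
  exists [::], (fun _ => 1); split; first by constructor.
  split.
    split; first by move=> [|j].
    split; first by move=> k k' r [i [o [H1 _]]]; case: k H1.
    split; first by move=> [|j].
    by move=> [|j].
  split.
    split; first by move=> j; split=> //; exact: (Mx_ge (fun _ => 1) j).
    split; first exact: (Mx_ge (fun _ => 1) (Ordinal n0)).
    by split.
  by [].
rewrite -cats1 => /exec_cat [c1 [H1 H2]].
have [L [S HA]] := IH _ H1.
inversion H2 as [|? ? c2 ? ? Hs He]; subst.
inversion He; subst.
have [L' [S' HA']] := step_inv HA Hs.
exists L', S'.
by rewrite /history pmap_cat.
Qed.

Lemma lin_alg rel n : 0 < n -> linearizable (RangeMaxRegister n) (alg rel n).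
Proof.
move=> n0 ls c Hex.
have [L [S [Hrun [[I3 [I4 [I5 I6]]] _]]]] := reach n0 Hex.
exists L; split=> //; split=> //; split=> //; split=> //.
exact: run_legal Hrun.
Qed.

Theorem theorem4 :
  exists c : nat, forall n : nat, 2 <= n ->
    linearizable (RangeMaxRegister n) (alg false n) /\
    sequentially_exact (alg false n) /\
    wait_free (alg false n) /\
    fence_free n /\
    step_complexity_le (alg false n) c.
Proof.
exists 2 => n Hn.
have n0 : 0 < n by apply: leq_trans Hn.
split; first exact: lin_alg.
split; first exact: seq_exact.
split; first exact: wait_free_alg.
split; first exact: (@lin_alg true n n0).
exact: step_cplx.
Qed.
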